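(* Let $G$ be an uncountable Polish group. The following are equivalent: (1) every countable subset of $G$ is contained in a $G_\delta$ Haar null subset of $G$; (2) there exists a countable dense subset of $G$ that is contained in a $G_\delta$ Haar null subset of $G$; (3) $G$ can be written as the union of a meager set and a Haar null set.
   Context: A Polish group is a topological group whose topology is separable and completely metrizable. A set $A\subseteq G$ is Haar null if there are a Borel set $B\supseteq A$ and a Borel probability measure $\mu$ on $G$ with $\mu(gBh)=0$ for all $g,h\in G$. *)

(* Defs.v *)
From HB Require Import structures.
From mathcomp Require Import all_boot all_order all_algebra.
From mathcomp Require Import all_classical all_reals all_analysis borel_hierarchy.
From mathcomp Require Import Rstruct Rstruct_topology.

Set Implicit Arguments.
Unset Strict Implicit.
Unset Printing Implicit Defensive.

Import Order.TTheory GRing.Theory Num.Theory.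
Import numFieldNormedType.Exports.
Local Open Scope classical_set_scope.
Local Open Scope ring_scope.

Notation RR := Rdefinitions.R.

Section PolishGroups.
Context {T : ptopologicalType}.

Definition topological_group (mul : T -> T -> T) (inv : T -> T) (e : T) : Prop :=
  [/\ (forall x y z, mul x (mul y z) = mul (mul x y) z),
      (forall x, mul e x = x /\ mul x e = x),
      (forall x, mul (inv x) x = e /\ mul x (inv x) = e),
      continuous (fun p : T * T => mul p.1 p.2)
    & continuous inv].

Definition separable_space : Prop :=
  exists D : set T, countable D /\ dense D.

Definition is_metric (d : T -> T -> RR) : Prop :=
  [/\ (forall x y, d x y = 0 <-> x = y),
      (forall x y, d x y = d y x)
    & (forall x y z, d x z <= d x y + d y z)].

Definition dball (d : T -> T -> RR) (x : T) (r : RR) : set T :=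
  [set y | d x y < r].

Definition completely_metrizable : Prop :=
  exists d : T -> T -> RR,
    [/\ is_metric d,
        (forall A : set T, open A <->
           (forall x, A x -> exists2 r : RR, 0 < r & dball d x r `<=` A))
      & (forall u : nat -> T,
           (forall eps : RR, 0 < eps -> exists N : nat,
              forall m n : nat, leq N m -> leq N n -> d (u m) (u n) < eps) ->
           exists x : T, u @ \oo --> x)].

Definition polish_space : Prop := separable_space /\ completely_metrizable.

Definition polish_group (mul : T -> T -> T) (inv : T -> T) (e : T) : Prop :=
  topological_group mul inv e /\ polish_space.

Definition borel_set (B : set T) : Prop := <<s @open T >> B.

Definition haar_null (mul : T -> T -> T) (A : set T) : Prop :=
  exists B : set T, [/\ borel_set B, A `<=` B &
    exists mu : probability (g_sigma_algebraType (@open T)) RR,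
      forall g h : T, mu [set mul (mul g b) h | b in B] = 0%E].

Definition nowhere_dense (S : set T) : Prop := interior (closure S) = set0.

Definition meager (M : set T) : Prop :=
  exists F : (set T)^nat, (forall n, nowhere_dense (F n)) /\
    M `<=` \bigcup_n F n.

End PolishGroups.

(* Main.v *)
Require Import Defs.
From HB Require Import structures.
From mathcomp Require Import all_boot all_order all_algebra.
From mathcomp Require Import all_classical all_reals all_analysis borel_hierarchy.
Local Open Scope classical_set_scope.
From mathcomp Require Import lra Rstruct Rstruct_topology.
Import Order.TTheory GRing.Theory Num.Theory.
Lemma mul_contl (T : ptopologicalType) (mul : T -> T -> T) :
  continuous (fun p : T * T => mul p.1 p.2) -> forall a, continuous (mul a).
Proof.
move=> hc a x.
exact: (@continuous2_cvg _ T T T _ _ (fun _ => a) id mul a x (hc (a, x)) (cvg_cst _) cvg_id).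
Qed.

Lemma mul_contr (T : ptopologicalType) (mul : T -> T -> T) :
  continuous (fun p : T * T => mul p.1 p.2) -> forall a, continuous (mul^~ a).
Proof.
move=> hc a x.
exact: (@continuous2_cvg _ T T T _ _ id (fun _ => a) mul x a (hc (x, a)) cvg_id (cvg_cst _)).
Qed.

Lemma borel_preimage (T : ptopologicalType) (f : T -> T) :
  continuous f -> forall B, borel_set B -> borel_set (f @^-1` B).
Proof.
move=> fc.
have : <<s @open T >> `<=` image_set_system setT f <<s @open T >>.
  apply: smallest_sub.
    apply: sigma_algebra_image; exact: smallest_sigma_algebra.
  move=> A oA; rewrite /image_set_system /=; apply: sub_sigma_algebra.
  apply: openI; first exact: openT.
  by apply: open_comp => // x _; exact: fc.
move=> H B /H; rewrite /image_set_system /=.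
have E : [set: T] `&` f @^-1` B = f @^-1` B.
  by apply/seteqP; split=> x /=; [case|move=> ?; split].
by rewrite E.
Qed.
Local Open Scope ring_scope.
Definition open_char {T : ptopologicalType} (d : T -> T -> RR) :=
  forall A : set T, open A <->
           (forall x, A x -> exists2 r : RR, 0 < r & dball d x r `<=` A).

Lemma dball_open (T : ptopologicalType) (d : T -> T -> RR) :
  is_metric d -> open_char d -> forall x r, open (dball d x r).
Proof.
move=> [_ _ tri] Hop x r; apply/Hop => y Hy.
exists (r - d x y); first by rewrite subr_gt0.
move=> z Hz; rewrite /dball /= in Hy Hz *.
have := tri x y z; lra.
Qed.

Lemma dball_center (T : ptopologicalType) (d : T -> T -> RR) :
  is_metric d -> forall x r, 0 < r -> dball d x r x.
Proof. by move=> [H0 _ _] x r r0; rewrite /dball /= (proj2 (H0 x x) erefl). Qed.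

Lemma baire_step (T : ptopologicalType) (d : T -> T -> RR) :
  is_metric d -> open_char d -> forall (W : set T), open W -> dense W ->
  forall (x : T) (r : RR) (k : nat), 0 < r ->
  exists q : T * RR, [/\ 0 < q.2, q.2 <= 1 / (k.+2)%:R &
     dball d q.1 (2 * q.2) `<=` W `&` dball d x r].
Proof.
move=> Hm Hop W oW dW x r k r0.
have [y [Hyb HyW]] : dball d x r `&` W !=set0.
  apply: dW; first by exists x; exact: dball_center.
  exact: dball_open.
have oWb : open (W `&` dball d x r) by apply: openI => //; exact: dball_open.
have [s s0 Hs] := proj1 (Hop _) oWb y (conj HyW Hyb).
have k0 : (0 : RR) < 1 / (k.+2)%:R by rewrite divr_gt0 // ltr0n.
exists (y, Num.min (s / 2) (1 / (k.+2)%:R)); split => /=.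
- by rewrite lt_min k0 andbT divr_gt0.
- by rewrite ge_min lexx orbT.
- move=> z Hz; apply: Hs; rewrite /dball /= in Hz *.
  have : Num.min (s / 2) (1 / (k.+2)%:R) <= s / 2 by rewrite ge_min lexx.
  lra.
Qed.

Arguments baire_step {T d}.
Arguments dball_open {T d}.
Arguments dball_center {T d}.

Fixpoint useq (T : Type) (x0 : T) (f : nat * (T * RR) -> T * RR) (k : nat) : T * RR :=
  match k with 0 => (x0, 1) | k'.+1 => f (k', useq T x0 f k') end.
Arguments useq {T}.

Lemma baire (T : ptopologicalType) (d : T -> T -> RR) (x0 : T) :
  is_metric d -> open_char d ->
  (forall u : nat -> T,
           (forall eps : RR, 0 < eps -> exists N : nat,
              forall m n : nat, leq N m -> leq N n -> d (u m) (u n) < eps) ->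
           exists x : T, u @ \oo --> x) ->
  forall W : nat -> set T, (forall k, open (W k)) -> (forall k, dense (W k)) ->
  exists x, forall k, W k x.
Proof.
move=> Hm Hop Hcomp W oW dW.
have step : forall kp : nat * (T * RR), exists q : T * RR, 0 < kp.2.2 ->
  [/\ 0 < q.2, q.2 <= 1 / (kp.1.+2)%:R &
     dball d q.1 (2 * q.2) `<=` W kp.1 `&` dball d kp.2.1 kp.2.2].
  move=> [k [x r]] /=; case: (boolP (0 < r)) => r0.
    have [q Hq] := baire_step Hm Hop _ (oW k) (dW k) x r k r0.
    by exists q.
  by exists (x0, 1).
have [f Hf] := boolp.choice step.
pose u := useq x0 f.
have uS : forall k, u k.+1 = f (k, u k) by [].
have upos : forall k, 0 < (u k).2 /\ (u k).2 <= 1 / (k.+1)%:R.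
  elim => [|k [IH1 IH2]]; first by rewrite /= divr1; split => //; lra.
  by rewrite uS; have [] := Hf (k, u k) IH1.
have ustep : forall k, dball d (u k.+1).1 (2 * (u k.+1).2) `<=` W k `&` dball d (u k).1 (u k).2.
  by move=> k; rewrite uS; have [] := Hf (k, u k) (proj1 (upos k)).
have nest : forall k i, dball d (u (k + i)%N).1 (u (k + i)%N).2 `<=` dball d (u k).1 (u k).2.
  move=> k; elim => [|i IH]; first by rewrite addn0.
  move=> z Hz; apply: IH; rewrite addnS in Hz.
  have Hz2 : dball d (u (k + i).+1).1 (2 * (u (k + i).+1).2) z.
    by rewrite /dball /= in Hz *; have := proj1 (upos (k + i).+1); lra.
  by case: (ustep _ z Hz2).
have umem : forall k m, (k <= m)%N -> dball d (u k).1 (u k).2 (u m).1.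
  move=> k m km; have := nest k (m - k)%N; rewrite subnKC //; apply.
  exact: (dball_center Hm _ _ (proj1 (upos _))).
pose v := fun n => (u n).1.
have [x hx] : exists x : T, v @ \oo --> x.
  apply: Hcomp => eps eps0.
  pose N := Num.Def.archi_bound (2 / eps).
  have hB : 2 / eps < N%:R by apply: archi_boundP; rewrite divr_ge0 // ltW.
  exists N => m n Nm Nn.
  have := umem N m Nm; have := umem N n Nn; rewrite /dball /=.
  case: Hm => _ sym tri.
  have := tri (u m).1 (u N).1 (u n).1; rewrite (sym (u m).1).
  have [r0 rN] := upos N.
  have N1 : (0 : RR) < N.+1%:R by rewrite ltr0n.
  have : (2 : RR) < N.+1%:R * eps.
    rewrite -ltr_pdivrMr // (lt_le_trans hB) // ler_nat; exact: leqnSn.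
  have : (u N).2 * N.+1%:R <= 1 by rewrite -ler_pdivlMr.
  move=> h1 h2 h3 h4 h5.
  rewrite (sym (u N).1 (u m).1) in h5.
  have : 2 * (u N).2 < eps.
    have : 0 < (eps - 2 * (u N).2) * N.+1%:R by nra.
    by rewrite pmulr_lgt0 // subr_gt0.
  lra.
exists x => k.
have Hnb : nbhs x (dball d x (u k.+1).2).
  apply: open_nbhs_nbhs; split; first exact: (dball_open Hm Hop).
  exact: (dball_center Hm _ _ (proj1 (upos _))).
have [N _ HN] := hx _ Hnb.
pose n := maxn N k.+1.
have h1 := HN n (leq_maxl _ _).
have h2 := umem k.+1 n (leq_maxr _ _).
have := ustep k x; case => //.
rewrite /dball /= in h1 h2 *.
case: Hm => _ sym tri.
have := tri (u k.+1).1 (u n).1 x; rewrite (sym (u n).1) in h1 *.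
move: h1 => /= h1; lra.
Qed.

Arguments mul_contl {T mul}.
Arguments mul_contr {T mul}.
Arguments borel_preimage {T f}.
Arguments baire {T d}.

Lemma enum_countable (T : Type) (C : set T) (x0 : T) : countable C ->
  exists g : nat -> T, C `<=` range g.
Proof.
move=> /countable_injP [f finj].
have : forall n : nat, exists y : T, (exists c, C c /\ f c = n) -> C y /\ f y = n.
  move=> n; case: (pselect (exists c, C c /\ f c = n)) => [[c Hc]|Hn].
    by exists c.
  by exists x0.
move=> /boolp.choice [g Hg]; exists g => c Cc; exists (f c) => //.
have [Cg fg] := Hg (f c) (ex_intro _ c (conj Cc erefl)).
by apply: finj; rewrite ?inE.
Qed.

Theorem theorem5p34 (T : ptopologicalType) (mul : T -> T -> T) (inv : T -> T) (e : T) :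
  polish_group mul inv e ->
  ~ countable [set: T] ->
  let P1 := forall C : set T, countable C ->
              exists H : set T, [/\ Gdelta H, haar_null mul H & C `<=` H] in
  let P2 := exists D : set T, [/\ countable D, dense D &
              exists H : set T, [/\ Gdelta H, haar_null mul H & D `<=` H]] in
  let P3 := exists M N : set T, [/\ meager M, haar_null mul N & M `|` N = setT] in
  (P1 <-> P2) /\ (P2 <-> P3).
Proof.
move=> [[assoc unit invl mulc invc] [[D0 [cD0 dD0]] [d [Hm Hop Hcomp]]]] _ P1 P2 P3.
have P12 : P1 -> P2.
  move=> h1; have [H [gH hH DH]] := h1 D0 cD0.
  by exists D0; split => //; exists H.
have P23 : P2 -> P3.
  move=> [D [_ dD [H [[F oF HF] hH DH]]]].
  exists (~` H), H; split => //.
  - exists (fun n => ~` F n); split.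
      move=> n; rewrite /nowhere_dense -(proj1 (closure_id _) (open_closedC (oF n))).
      apply/seteqP; split => // x Hx.
      move: Hx; rewrite /interior /= nbhsE; case=> V [oV Vx] VF.
      have [y [Vy Dy]] := dD V (ex_intro _ x Vx) oV.
      apply: (VF y Vy); move: (DH y Dy); rewrite HF; exact.
    move=> x Hx.
    have [i Hi] : exists i, ~ F i x.
      apply: contrapT => Hn; apply: Hx; rewrite HF => i _.
      apply: contrapT => Hi; apply: Hn; by exists i.
    by exists i.
  - apply/seteqP; split => // x _.
    by case: (pselect (H x)) => h; [right|left].
have P31 : P3 -> P1.
  move=> [M [N [[F [nF MF]] [B [bB NB [mu hmu]]] MN]]] C cC.
  pose U n := ~` closure (F n).
  have oU : forall n, open (U n) by move=> n; apply: closed_openC; exact: closed_closure.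
  have dU : forall n, dense (U n).
    move=> n V [w0 Vo] oV; apply: contrapT => hE.
    have VF : V `<=` closure (F n).
      move=> z Vz; apply: contrapT => hz; apply: hE; by exists z.
    have : interior (closure (F n)) w0.
      rewrite /interior /= nbhsE; by exists V.
    by rewrite nF.
  have H0B : forall x, (forall n, U n x) -> B x.
    move=> x Ux; apply: NB.
    have : (M `|` N) x by rewrite MN.
    case => // Mx; have [n _ Fx] := MF x Mx.
    by case: (Ux n); apply: subset_closure.
  have [g Cg] := @enum_countable _ C e cC.
  pose W k := match unpickle k with
    | Some (n, j) => (mul^~ (g j)) @^-1` U n | None => setT end.
  have contr := mul_contr mulc.
  have contl := mul_contl mulc.
  have oW : forall k, open (W k).
    move=> k; rewrite /W; case: (unpickle k) => [[n j]|]; last exact: openT.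
    by apply: open_comp => // z _; exact: contr.
  have dW : forall k, dense (W k).
    move=> k; rewrite /W; case: (unpickle k) => [[n j]|]; last first.
      by move=> V [w0 Vo] _; exists w0.
    move=> V [w0 Vo] oV.
    pose V' := (mul^~ (inv (g j))) @^-1` V.
    have oV' : open V' by apply: open_comp => // z _; exact: contr.
    have [z [V'z Uz]] : V' `&` U n !=set0.
      apply: dU => //; exists (mul w0 (g j)); rewrite /V' /=.
      by rewrite -assoc (proj2 (invl _)) (proj2 (unit _)).
    exists (mul z (inv (g j))); split => //=.
    by rewrite -assoc (proj1 (invl _)) (proj2 (unit _)).
  have [x Wx] := baire e Hm Hop Hcomp W oW dW.
  have xU : forall n j, U n (mul x (g j)).
    by move=> n j; have := Wx (pickle (n, j)); rewrite /W pickleK.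
  exists ((mul x) @^-1` \bigcap_n U n); split.
  - exists (fun n => (mul x) @^-1` U n).
      by move=> n; apply: open_comp => // z _; exact: contl.
    by apply/seteqP; split => z /= Hz n _; exact: Hz.
  - exists ((mul x) @^-1` B); split.
    + exact: borel_preimage.
    + by move=> z /= Hz; apply: H0B => n; exact: Hz.
    + exists mu => g0 h0.
      rewrite -(hmu (mul g0 (inv x)) h0); congr (mu _).
      apply/seteqP; split => _ [b Hb <-].
        exists (mul x b) => //.
        by rewrite -(assoc g0) (assoc (inv x)) (proj1 (invl _)) (proj1 (unit _)).
      exists (mul (inv x) b) => /=.
        by rewrite assoc (proj2 (invl _)) (proj1 (unit _)).
      by rewrite (assoc g0).
  - move=> c Cc; have [j _ <-] := Cg c Cc.
    by move=> n _; exact: xU.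
split; split => //.
- by move=> h2; apply: P31; apply: P23.
- by move=> h3; apply: P12; apply: P31.
Qed.
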